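(* If $\sigma(x)/x\in\mathbb{Z}[\zeta_p]$, then $I=x\mathcal{O}_\mathbb{K}$, i.e. $I$ is the principal ideal of $\mathcal{O}_\mathbb{K}$ generated by $x$.
   Context: Let $n>1$ be an odd integer and $p$ a prime with $p\equiv 1 \pmod n$. Let $\zeta_p=e^{2\pi i/p}$, let $r$ be a primitive root modulo $p$, and let $\sigma$ be the automorphism of $\mathbb{Q}(\zeta_p)$ with $\sigma(\zeta_p)=\zeta_p^r$. Let $\mathbb{K}=\{y\in\mathbb{Q}(\zeta_p):\sigma^n(y)=y\}$. Let $\alpha=\prod_{j=0}^{(p-3)/2}(1-\zeta_p^{r^j})$, let $\lambda$ be an integer with $\lambda(r-1)\equiv1\pmod p$, $z=\zeta_p^{\lambda}\alpha(1-\zeta_p)$, and $x=\mathrm{Tr}_{\mathbb{Q}(\zeta_p)/\mathbb{K}}(z)=\sum_{j=1}^{(p-1)/n}\sigma^{jn}(z)$. Let $I$ be the $\mathbb{Z}$-module generated by $x,\sigma(x),\dots,\sigma^{n-1}(x)$ (it is an ideal of $\mathcal{O}_\mathbb{K}$). *)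

(* Defs.v *)
From HB Require Import structures.
From mathcomp Require Import all_boot all_order all_algebra all_field.
Set Implicit Arguments. Unset Strict Implicit. Unset Printing Implicit Defensive.
Import Order.TTheory GRing.Theory Num.Theory.
Local Open Scope ring_scope.

(* zeta_p = e^{2 pi i/p}: p.-root (-1) is the root of -1 of minimal
   argument, i.e. e^{i pi/p}; its square is e^{2 pi i/p}. *)
Definition zeta (p : nat) : algC := (p.-root (-1)) ^+ 2.

Definition Qzeta (p : nat) (y : algC) : Prop :=
  exists q : {poly rat}, y = (map_poly ratr q).[zeta p].

Definition Zzeta (p : nat) (y : algC) : Prop :=
  exists q : {poly int}, y = (map_poly intr q).[zeta p].

Definition Kfix (p n : nat) (s : algC -> algC) (y : algC) : Prop :=
  Qzeta p y /\ iter n s y = y.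

Definition OK (p n : nat) (s : algC -> algC) (y : algC) : Prop :=
  Kfix p n s y /\ y \in Aint.

Definition alpha (p r : nat) : algC :=
  \prod_(j < (p.-1)./2) (1 - zeta p ^+ (r ^ j)).

Definition zz (p r : nat) (lam : int) : algC :=
  zeta p ^ lam * alpha p r * (1 - zeta p).

(* x = Tr_{Q(zeta)/K}(z) = sum_{j=1}^{(p-1)/n} sigma^{jn}(z) *)
Definition xx (p n r : nat) (lam : int) (s : algC -> algC) : algC :=
  \sum_(1 <= j < ((p.-1) %/ n).+1) iter (j * n) s (zz p r lam).

Definition Imod (p n r : nat) (lam : int) (s : algC -> algC) (w : algC) : Prop :=
  exists c : 'I_n -> int,
    w = \sum_(i < n) (iter i s (xx p n r lam s)) *~ c i.

Definition principal (p n r : nat) (lam : int) (s : algC -> algC) (w : algC) : Prop :=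
  exists2 y, OK p n s y & w = xx p n r lam s * y.

(* Main.v *)
Require Import Defs.
From HB Require Import structures.
From mathcomp Require Import all_boot all_order all_algebra all_field.
From mathcomp Require Import zify ring.
Import Order.TTheory GRing.Theory Num.Theory.
Local Open Scope ring_scope.


Lemma zeta_prim p : prime p -> p.-primitive_root (zeta p).
Proof.
move=> pp; have p1 : (1 < p)%N by apply: prime_gt1.
have p0 : (0 < p)%N by apply: prime_gt0.
have wp : (p.-root (-1 : algC)) ^+ p = -1 by rewrite rootCK.
have wlt := rootC_lt0 (-1 : algC) p1.
have zp : zeta p ^+ p = 1 by rewrite /zeta -exprM mulnC exprM wp sqrrN expr1n.
have z1 : zeta p != 1.
  rewrite /zeta sqrf_eq1 negb_or; apply/andP; split.
    apply/eqP=> w1; move: wp; rewrite w1 expr1n => /eqP.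
    by rewrite -addr_eq0 (eqr_nat _ 2 0).
  by apply/eqP=> wN; move: wlt; rewrite wN ltrN10.
have [m pm hm] := prim_order_exists p0 zp.
case/primeP: pp => _ H; move/H: hm; case/orP=> /eqP Hm; subst m => //.
by move: z1; rewrite -(prim_expr_order pm) expr1 eqxx.
Qed.

Lemma geom0 (x : algC) p : x ^+ p = 1 -> x != 1 -> \sum_(t < p) x ^+ t = 0.
Proof.
move=> xp x1; have := subrX1 x p; rewrite xp subrr => /esym/eqP.
by rewrite mulf_eq0 subr_eq0 (negbTE x1) /= => /eqP.
Qed.

Lemma gsum p j : prime p ->
  \sum_(1 <= t < p) (zeta p ^+ j) ^+ t = if (p %| j)%N then (p.-1)%:R else -1.
Proof.
move=> pp; have pz := @zeta_prim p pp; have p0 := prime_gt0 pp.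
have E : \sum_(0 <= t < p) (zeta p ^+ j) ^+ t = 1 + \sum_(1 <= t < p) (zeta p ^+ j) ^+ t.
  by rewrite big_ltn // expr0.
case: ifP => hj.
  apply: (addrI 1); rewrite -E big_mkord.
  have ->: zeta p ^+ j = 1 by apply/eqP; rewrite -(prim_order_dvd pz).
  rewrite (eq_bigr (fun _ => 1)) => [|t _]; last by rewrite expr1n.
  by rewrite sumr_const card_ord -{1}(prednK p0) mulrS.
apply: (addrI 1); rewrite -E big_mkord geom0 ?subrr //.
  by rewrite -exprM mulnC exprM (prim_expr_order pz) expr1n.
by rewrite -(prim_order_dvd pz) hj.
Qed.

Lemma norm_pi p : prime p -> \prod_(1 <= t < p) (1 - zeta p ^+ t) = p%:R.
Proof.
move=> pp; have pz := @zeta_prim p pp; have p0 := prime_gt0 pp.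
have F := factor_Xn_sub_1 pz.
rewrite big_ltn // expr0 subrX1 in F.
have /mulfI F2 : ('X - 1 : {poly algC}) != 0 by rewrite -[1]/(1%:P) polyXsubC_eq0.
have {F}F := F2 _ _ F.
have := congr1 (fun q => q.[1]) F; rewrite horner_prod horner_sum /=.
under eq_bigr do rewrite hornerXsubC.
under [X in _ = X -> _]eq_bigr do rewrite hornerXn expr1n.
by rewrite sumr_const card_ord => ->.
Qed.

Lemma nu_exists p : prime p ->
  exists nu : nat -> {rmorphism algC -> algC},
    forall t, (0 < t < p)%N -> nu t (zeta p) = zeta p ^+ t.
Proof.
move=> pp; have pz := @zeta_prim p pp.
have zp : zeta p ^+ p = 1 := prim_expr_order pz.
have H t : {u : {rmorphism algC -> algC} | (0 < t < p)%N -> u (zeta p) = zeta p ^+ t}.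
  case: (boolP (coprime t p)) => h.
    have [u hu] := Qn_aut_exists h; exists u => _; exact: hu.
  exists (sval (Qn_aut_exists (coprime1n p))) => /andP [t0 tp].
  move: h; rewrite coprime_sym prime_coprime //.
  by rewrite gtnNdvd.
exists (fun t => sval (H t)) => t ht; exact: (svalP (H t) ht).
Qed.


Lemma trace_comp p (nu : nat -> {rmorphism algC -> algC}) N (a : nat -> rat) :
  prime p -> (forall t, (0 < t < p)%N -> nu t (zeta p) = zeta p ^+ t) ->
  (N.+1 <= p.-1)%N ->
  \sum_(1 <= t < p) nu t ((\sum_(i < N.+1) ratr (a i) * zeta p ^+ i) * (1 - zeta p))
  = p%:R * ratr (a 0%N).
Proof.
move=> pp hnu hN; have pz := @zeta_prim p pp; have p0 := prime_gt0 pp.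
set z := zeta p.
have E : forall t, (1 <= t < p)%N -> nu t ((\sum_(i < N.+1) ratr (a i) * z ^+ i) * (1 - z))
   = \sum_(i < N.+1) ratr (a i) * ((z ^+ i) ^+ t - (z ^+ i.+1) ^+ t).
  move=> t ht; rewrite rmorphM rmorph_sum rmorphB rmorph1 hnu // big_distrl /=.
  apply: eq_bigr => i _; rewrite rmorphM fmorph_rat rmorphXn hnu // -mulrA; congr (_ * _).
  by rewrite mulrBr mulr1 -exprSr -!exprM [(t * i)%N]mulnC [(t * i.+1)%N]mulnC.
rewrite (eq_big_nat _ _ E) exchange_big /=.
under eq_bigr do rewrite -mulr_sumr sumrB !gsum //.
rewrite big_ord_recl /= dvdn0 big1 ?addr0.
  rewrite gtnNdvd ?prime_gt1 //.
  by rewrite opprK -{2}(prednK p0) -natr1 mulrC.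
move=> i _; rewrite /bump /= !add1n.
rewrite !gtnNdvd //.
- by rewrite subrr mulr0.
- by have := ltn_ord i; move: hN p0; clear; lia.
- by have := ltn_ord i; move: hN p0; clear; lia.
Qed.

Lemma a0_int p (nu : nat -> {rmorphism algC -> algC}) N (a : nat -> rat) :
  prime p -> (forall t, (0 < t < p)%N -> nu t (zeta p) = zeta p ^+ t) ->
  (N.+1 <= p.-1)%N ->
  (\sum_(i < N.+1) ratr (a i) * zeta p ^+ i) \in Aint -> (ratr (a 0%N) : algC) \in Num.int.
Proof.
move=> pp hnu hN yA; have pz := @zeta_prim p pp; have p0 := prime_gt0 pp.
have p1 := prime_gt1 pp.
have zA : zeta p \in Aint := Aint_prim_root pz.
have cE := trace_comp p nu N a pp hnu hN.
set y := \sum_(i < N.+1) _ in yA cE.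
set c := p%:R * ratr (a 0%N) in cE.
have cA : c \in Aint.
  by rewrite -cE rpred_sum // => t _; rewrite Aint_aut rpredM // rpredB.
pose W := \sum_(1 <= t < p) nu t y * \sum_(i < t) zeta p ^+ i.
have cW : c = (1 - zeta p) * W.
  rewrite -cE mulr_sumr; apply: eq_big_nat => t ht.
  rewrite rmorphM rmorphB rmorph1 hnu // mulrCA; congr (_ * _).
  by rewrite -opprB subrX1 -mulNr opprB.
have WA : W \in Aint.
  by rewrite rpred_sum // => t _; rewrite rpredM ?Aint_aut // rpred_sum // => i _; rewrite rpredX.
have cR : c = ratr (p%:R * a 0%N) by rewrite rmorphM /= ratr_nat.
have cQ : c \in Crat by rewrite cR Crat_rat.
have /intrP [k ck] := Cint_rat_Aint cQ cA.
pose V := \prod_(1 <= t < p) nu t W.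
have VA : V \in Aint by rewrite rpred_prod // => t _; rewrite Aint_aut.
have cV : c ^+ p.-1 = p%:R * V.
  have : \prod_(1 <= t < p) nu t c = c ^+ p.-1.
    rewrite (eq_bigr (fun _ => c)) ?prodr_const_nat ?subn1 // => t _.
    by rewrite cR fmorph_rat.
  move <-; rewrite -(@norm_pi p pp) -big_split /=; apply: eq_big_nat => t ht.
  by rewrite cW rmorphM rmorphB rmorph1 hnu.
have pn0 : (p%:R : algC) != 0 by rewrite pnatr_eq0 -lt0n.
have VQ : V \in Crat.
  have -> : V = c ^+ p.-1 / p%:R by rewrite cV mulrC mulKf.
  by rewrite rpred_div ?rpredX ?rpred_nat.
have /intrP [m vm] := Cint_rat_Aint VQ VA.
have km : k ^+ p.-1 = p%:Z * m.
  by apply: (@intr_inj algC); rewrite rmorphXn rmorphM /= -ck -vm cV.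
have dk : (p %| `|k|)%N.
  have : (p %| `|k| ^ p.-1)%N by rewrite -abszX km abszM dvdn_mulr.
  by rewrite Euclid_dvdX // => /andP [].
have dkz : (p%:Z %| k)%Z by rewrite dvdzE.
have -> : (ratr (a 0%N) : algC) = (k %/ p%:Z)%Z%:~R.
  apply: (mulfI pn0); rewrite -/c ck -{1}(divzK dkz) rmorphM /= mulrC.
  by [].
by rewrite rpred_int.
Qed.

Lemma coords_int p (nu : nat -> {rmorphism algC -> algC}) N :
  prime p -> (forall t, (0 < t < p)%N -> nu t (zeta p) = zeta p ^+ t) ->
  (N <= p.-1)%N -> forall (a : nat -> rat),
  (\sum_(i < N) ratr (a i) * zeta p ^+ i) \in Aint ->
  forall i, (i < N)%N -> (ratr (a i) : algC) \in Num.int.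
Proof.
move=> pp hnu; have pz := @zeta_prim p pp; have p0 := prime_gt0 pp.
have zA : zeta p \in Aint := Aint_prim_root pz.
elim: N => [//|N IH] hN a yA [_|i hi].
  exact: (a0_int p nu N a pp hnu hN yA).
have a0 := a0_int p nu N a pp hnu hN yA.
apply: (IH (ltnW hN) (fun i => a i.+1)) => //.
have -> : \sum_(i < N) ratr (a i.+1) * zeta p ^+ i =
   ((\sum_(i < N.+1) ratr (a i) * zeta p ^+ i) - ratr (a 0%N)) * zeta p ^+ p.-1.
  rewrite big_ord_recl /= expr0 mulr1 (addrC (ratr (a 0%N))) addrK mulr_suml.
  apply: eq_bigr => j _; rewrite -mulrA -exprD /bump /= add1n addSnnS prednK //.
  by rewrite exprD (prim_expr_order pz) mulr1.
apply: rpredM; last exact: rpredX.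
by apply: rpredB => //; exact: Aint_Cint.
Qed.


Lemma Zz_intpow p (c : int) i : Zzeta p (c%:~R * zeta p ^+ i).
Proof.
exists (c%:P * 'X^i); rewrite rmorphM /= map_polyC map_polyXn /=.
by rewrite hornerCM hornerXn.
Qed.

Lemma Zz_add p x y : Zzeta p x -> Zzeta p y -> Zzeta p (x + y).
Proof.
by move=> [q1 ->] [q2 ->]; exists (q1 + q2); rewrite rmorphD hornerD.
Qed.

Lemma Zz_mul p x y : Zzeta p x -> Zzeta p y -> Zzeta p (x * y).
Proof.
by move=> [q1 ->] [q2 ->]; exists (q1 * q2); rewrite rmorphM hornerM.
Qed.

Lemma Zz_int p (c : int) : Zzeta p c%:~R.
Proof. by have := Zz_intpow p c 0; rewrite expr0 mulr1. Qed.

Lemma Zz_zeta p : Zzeta p (zeta p).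
Proof. by have := Zz_intpow p 1 1; rewrite mul1r expr1. Qed.

Lemma Zz_opp p x : Zzeta p x -> Zzeta p (- x).
Proof. by move=> h; rewrite -mulN1r; apply: Zz_mul => //; apply: (Zz_int p (-1)). Qed.

Lemma Zz_sum p (I : Type) (r : seq I) (P : pred I) (F : I -> algC) :
  (forall i, P i -> Zzeta p (F i)) -> Zzeta p (\sum_(i <- r | P i) F i).
Proof.
move=> h; elim/big_rec: _ => [|i x Pi hx]; first exact: (Zz_int p 0).
exact: Zz_add (h i Pi) hx.
Qed.

Lemma Zz_Aint p x : prime p -> Zzeta p x -> x \in Aint.
Proof.
move=> pp [q ->]; have zA : zeta p \in Aint := Aint_prim_root (@zeta_prim p pp).
rewrite horner_coef rpred_sum // => i _; rewrite coef_map /=.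
by apply: rpredM; [apply: Aint_int | apply: rpredX].
Qed.

Lemma Zz_Q p x : Zzeta p x -> Qzeta p x.
Proof.
move=> [q ->]; exists (map_poly intr q); rewrite -map_poly_comp.
by congr (_.[_]); apply: eq_map_poly => c /=; rewrite rmorph_int.
Qed.

Lemma QA_Z p y : prime p -> Qzeta p y -> y \in Aint -> Zzeta p y.
Proof.
move=> pp [q ->] yA; have pz := @zeta_prim p pp; have p0 := prime_gt0 pp.
have [nu hnu] := nu_exists p pp.
pose Phi : {poly rat} := \poly_(i < p) 1.
have Phi0 : (map_poly ratr Phi).[zeta p] = 0 :> algC.
  rewrite (horner_coef_wide _ (n := p)); last by rewrite size_map_poly size_poly.
  under eq_bigr => i _ do rewrite coef_map coef_poly ltn_ord /= rmorph1 mul1r.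
  apply: geom0; first exact: prim_expr_order pz.
  by rewrite -[zeta p]expr1 -(prim_order_dvd pz) dvdn1; apply/eqP => h; move: (prime_gt1 pp); rewrite h.
have sPhi : size Phi = p by rewrite size_poly_eq // oner_eq0.
have Phin0 : Phi != 0 by rewrite -size_poly_eq0 sPhi -lt0n.
pose r := q %% Phi.
have E1 : (map_poly ratr q).[zeta p] = (map_poly ratr r).[zeta p] :> algC.
  by rewrite {1}(divp_eq q Phi) rmorphD rmorphM hornerD hornerM Phi0 mulr0 add0r.
have sr : (size r <= p.-1)%N.
  by have := ltn_modp q Phi; rewrite Phin0 sPhi; case: (p) p0.
have E2 : (map_poly ratr r).[zeta p] = \sum_(i < p.-1) ratr r`_i * zeta p ^+ i :> algC.
  rewrite (horner_coef_wide _ (n := p.-1)) ?size_map_poly //.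
  by apply: eq_bigr => i _; rewrite coef_map.
rewrite E1 E2 in yA *.
have hint := coords_int p nu (p.-1) pp hnu (leqnn _) (fun i => r`_i) yA.
apply: Zz_sum => i _; have := hint i (ltn_ord i); rewrite intrEfloor => /eqP <-.
exact: Zz_intpow.
Qed.


Lemma iter_rm (s : {rmorphism algC -> algC}) k :
  exists u : {rmorphism algC -> algC}, forall y, iter k s y = u y.
Proof.
elim: k => [|k [u Hu]]; first by exists idfun.
by exists (s \o u)%FUN => y /=; rewrite Hu.
Qed.

Lemma iter_zeta p r (s : {rmorphism algC -> algC}) k :
  s (zeta p) = zeta p ^+ r -> iter k s (zeta p) = zeta p ^+ (r ^ k).
Proof.
move=> hs; elim: k => [|k IH]; first by rewrite expn0 expr1.
by rewrite iterS IH rmorphXn hs -exprM expnS mulnC.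
Qed.

Lemma s_zlam p r (lam : int) (s : {rmorphism algC -> algC}) :
  prime p -> (lam * (r%:Z - 1) = 1 %[mod p%:Z])%Z ->
  s (zeta p) = zeta p ^+ r -> s (zeta p ^ lam) = zeta p ^ lam * zeta p.
Proof.
move=> pp hl hs; have pz := @zeta_prim p pp.
have z0 : zeta p != 0 by rewrite (prim_root_eq0 pz) -lt0n prime_gt0.
rewrite fmorphXz hs -[zeta p ^+ r]/(zeta p ^ (r%:Z)) exprz_exp.
have -> : (r%:Z * lam = lam + lam * (r%:Z - 1))%R by rewrite mulrBr mulr1 addrC subrK mulrC.
rewrite expfzDr //; congr (_ * _).
have : lam * (r%:Z - 1) = divz (lam * (r%:Z - 1)) p%:Z * p%:Z + 1.
  rewrite {1}(divz_eq (lam * (r%:Z - 1)) p%:Z) hl; congr (_ + _).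
  by rewrite modz_small //; apply/andP; split => //; rewrite ltz_nat prime_gt1.
move=> ->; rewrite expfzDr // [(_ * p%:Z)]mulrC -exprz_exp.
by rewrite -[zeta p ^ p%:Z]/(zeta p ^+ p) (prim_expr_order pz) exp1rz mul1r ?expr1z.
Qed.

Lemma Fp_full p r : prime p -> (p.-1).-primitive_root (r%:R : 'F_p) ->
  r ^ p.-1 = 1 %[mod p].
Proof.
move=> pp pr; have := val_Fp_nat pp (r ^ p.-1); rewrite natrX (prim_expr_order pr).
move=> e1; have e2 := val_Fp_nat pp 1.
by rewrite -e1 -e2.
Qed.

Lemma Fp_half p r : prime p -> odd p -> (p.-1).-primitive_root (r%:R : 'F_p) ->
  (p %| r ^ (p.-1)./2 + 1)%N.
Proof.
move=> pp op pr; have p1 := prime_gt1 pp.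
set h := (p.-1)./2.
have h2 : (h * 2 = p.-1)%N.
  by rewrite /h -(odd_halfK op) doubleK muln2 odd_halfK.
have : ((r%:R : 'F_p) ^+ h) ^+ 2 = 1 by rewrite -exprM h2 (prim_expr_order pr).
move/eqP; rewrite sqrf_eq1 => /orP [/eqP e1|/eqP e2].
  exfalso; have := prim_order_dvd pr h; rewrite e1 eqxx => /dvdn_leq.
  have h0 : (0 < h)%N by move: h2 p1 op; clear; lia.
  by move/(_ h0); move: h2 h0; clear; lia.
rewrite (dvdn_pcharf (pchar_Fp pp)) natrD natrX e2 addNr //.
Qed.

Lemma Fp_gen p r a : prime p -> (p.-1).-primitive_root (r%:R : 'F_p) ->
  ~~ (p %| a)%N -> exists k, (k < p.-1)%N /\ a = r ^ k %[mod p].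
Proof.
move=> pp pr na; have p0 := prime_gt0 pp.
have y0 : (a%:R : 'F_p) != 0 by rewrite -(dvdn_pcharf (pchar_Fp pp)).
have yp : (a%:R : 'F_p) ^+ p.-1 = 1.
  have := expf_card (a%:R : 'F_p); rewrite card_Fp // => h.
  apply: (mulIf y0); by rewrite -exprSr prednK // h mul1r.
have [i hi] := prim_rootP pr yp.
exists i; split => //.
by have := congr1 val hi; rewrite -natrX /= !val_Fp_nat.
Qed.

Lemma s_alpha p r (s : {rmorphism algC -> algC}) : prime p -> odd p ->
  (p.-1).-primitive_root (r%:R : 'F_p) -> s (zeta p) = zeta p ^+ r ->
  s (alpha p r) = - zeta p ^+ p.-1 * alpha p r.
Proof.
move=> pp op pr hs; have pz := @zeta_prim p pp; have p0 := prime_gt0 pp.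
have z0 : zeta p != 0 by rewrite (prim_root_eq0 pz) -lt0n prime_gt0.
have z1 : 1 - zeta p != 0.
  rewrite subr_eq0 eq_sym -[zeta p]expr1 -(prim_order_dvd pz) dvdn1.
  by apply/eqP => h; move: (prime_gt1 pp); rewrite h.
set h := (p.-1)./2.
have ew : zeta p ^+ (r ^ h) = zeta p ^+ p.-1.
  apply: (mulIf z0); rewrite -!exprSr prednK // (prim_expr_order pz).
  by apply/eqP; rewrite -(prim_order_dvd pz) -addn1 (Fp_half p r pp op pr).
have sa : s (alpha p r) = \prod_(j < h) (1 - zeta p ^+ (r ^ j.+1)).
  rewrite rmorph_prod; apply: eq_bigr => j _.
  by rewrite rmorphB rmorph1 rmorphXn hs -exprM expnS.
have E1 : \prod_(j < h.+1) (1 - zeta p ^+ (r ^ j)) = (1 - zeta p) * s (alpha p r).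
  by rewrite big_ord_recl expn0 expr1 sa.
have E2 : \prod_(j < h.+1) (1 - zeta p ^+ (r ^ j)) = alpha p r * (1 - zeta p ^+ (r ^ h)).
  by rewrite big_ord_recr.
apply: (mulfI z1); rewrite -E1 E2 ew.
have wz : zeta p ^+ p.-1 * zeta p = 1 by rewrite -exprSr prednK // (prim_expr_order pz).
have e : 1 - zeta p ^+ p.-1 = - zeta p ^+ p.-1 * (1 - zeta p).
  by rewrite mulrBr mulr1 mulNr opprK wz addrC.
rewrite e; ring.
Qed.

Lemma iter_z p r lam (s : {rmorphism algC -> algC}) k : prime p -> odd p ->
  (p.-1).-primitive_root (r%:R : 'F_p) ->
  (lam * (r%:Z - 1) = 1 %[mod p%:Z])%Z -> s (zeta p) = zeta p ^+ r ->
  iter k s (zz p r lam) =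
    (-1) ^+ k * (zeta p ^ lam * alpha p r * (1 - zeta p ^+ (r ^ k))).
Proof.
move=> pp op pr hl hs; have pz := @zeta_prim p pp; have p0 := prime_gt0 pp.
have zW : zeta p * zeta p ^+ p.-1 = 1 by rewrite -exprS prednK // (prim_expr_order pz).
elim: k => [|k IH]; first by rewrite /= expr0 mul1r expn0 expr1.
rewrite iterS IH rmorphM rmorphXn rmorphN1 !rmorphM rmorphB rmorph1 rmorphXn hs.
rewrite -exprM expnS [(r * _)%N]mulnC.
rewrite (s_zlam p r lam s pp hl hs) (s_alpha p r s pp op pr hs).
set L := zeta p ^ lam; set W := zeta p ^+ p.-1; set A := alpha p r.
set Z := zeta p ^+ (r ^ k * r).
rewrite (_ : L * zeta p * (- W * A) = - (L * A) * (zeta p * W)); last by ring.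
by rewrite zW mulr1 exprS; ring.
Qed.

Lemma D_term p r lam (s : {rmorphism algC -> algC}) a : prime p -> odd p ->
  (p.-1).-primitive_root (r%:R : 'F_p) ->
  (lam * (r%:Z - 1) = 1 %[mod p%:Z])%Z -> s (zeta p) = zeta p ^+ r ->
  zeta p ^ lam * alpha p r * (1 - zeta p ^+ a) = 0 \/
  exists k, zeta p ^ lam * alpha p r * (1 - zeta p ^+ a) = (-1) ^+ k * iter k s (zz p r lam).
Proof.
move=> pp op pr hl hs; have pz := @zeta_prim p pp.
case: (boolP (p %| a)%N) => ha.
  left; move: ha; rewrite (prim_order_dvd pz) => /eqP ->.
  by rewrite subrr mulr0.
right; have [k [_ hk]] := Fp_gen p r a pp pr ha.
exists k; rewrite (iter_z p r lam s k pp op pr hl hs) mulrA -exprMn mulrNN mulr1 expr1n mul1r.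
by congr (_ * (1 - _)); apply/eqP; rewrite (eq_prim_root_expr pz) hk.
Qed.

Lemma z_period p r lam (s : {rmorphism algC -> algC}) k : prime p -> odd p ->
  (p.-1).-primitive_root (r%:R : 'F_p) ->
  (lam * (r%:Z - 1) = 1 %[mod p%:Z])%Z -> s (zeta p) = zeta p ^+ r ->
  iter (k + p.-1) s (zz p r lam) = iter k s (zz p r lam).
Proof.
move=> pp op pr hl hs; have pz := @zeta_prim p pp; have p0 := prime_gt0 pp.
rewrite iterD; congr (iter k s _).
rewrite (iter_z p r lam s _ pp op pr hl hs) -signr_odd.
have -> : odd p.-1 = false by move: op; rewrite -{1}(prednK p0) /= => /negbTE.
rewrite expr0 mul1r.
have -> : zeta p ^+ (r ^ p.-1) = zeta p.
  by rewrite -{2}[zeta p]expr1; apply/eqP; rewrite (eq_prim_root_expr pz) (Fp_full p r pp pr).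
by [].
Qed.



Lemma iterD_r (s : {rmorphism algC -> algC}) k a b : iter k s (a + b) = iter k s a + iter k s b.
Proof. by have [u hu] := iter_rm s k; rewrite !hu rmorphD. Qed.
Lemma iterN_r (s : {rmorphism algC -> algC}) k a : iter k s (- a) = - iter k s a.
Proof. by have [u hu] := iter_rm s k; rewrite !hu rmorphN. Qed.
Lemma iterM_r (s : {rmorphism algC -> algC}) k a b : iter k s (a * b) = iter k s a * iter k s b.
Proof. by have [u hu] := iter_rm s k; rewrite !hu rmorphM. Qed.
Lemma iter0_r (s : {rmorphism algC -> algC}) k : iter k s 0 = 0.
Proof. by have [u hu] := iter_rm s k; rewrite !hu rmorph0. Qed.
Lemma iterMz_r (s : {rmorphism algC -> algC}) k a c : iter k s (a *~ c) = iter k s a *~ c.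
Proof. by have [u hu] := iter_rm s k; rewrite !hu rmorphMz. Qed.
Lemma iterX_r (s : {rmorphism algC -> algC}) k a e : iter k s (a ^+ e) = iter k s a ^+ e.
Proof. by have [u hu] := iter_rm s k; rewrite !hu rmorphXn. Qed.
Lemma iterV_r (s : {rmorphism algC -> algC}) k a : iter k s (a^-1) = (iter k s a)^-1.
Proof. by have [u hu] := iter_rm s k; rewrite !hu fmorphV. Qed.
Lemma iter_eq0 (s : {rmorphism algC -> algC}) k a : (iter k s a == 0) = (a == 0).
Proof. by have [u hu] := iter_rm s k; rewrite !hu fmorph_eq0. Qed.
Lemma iter_int (s : {rmorphism algC -> algC}) k (c : int) : iter k s c%:~R = c%:~R.
Proof. by have [u hu] := iter_rm s k; rewrite !hu rmorph_int. Qed.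
Lemma iter_sum_r (s : {rmorphism algC -> algC}) k (I : Type) (r : seq I) (P : pred I) (F : I -> algC) :
  iter k s (\sum_(i <- r | P i) F i) = \sum_(i <- r | P i) iter k s (F i).
Proof. have [u hu] := iter_rm s k; rewrite hu rmorph_sum; apply: eq_bigr => i _; by rewrite hu. Qed.
Lemma iter1_r (s : {rmorphism algC -> algC}) k : iter k s 1 = 1.
Proof. by have [u hu] := iter_rm s k; rewrite !hu rmorph1. Qed.

Lemma iter_comm (s : algC -> algC) a b y : iter a s (iter b s y) = iter b s (iter a s y).
Proof. by rewrite -!iterD addnC. Qed.
Lemma iter_fix (s : algC -> algC) n y k : iter n s y = y -> iter (k * n) s y = y.
Proof. by move=> h; elim: k => [//|k IH]; rewrite mulSn iterD IH h. Qed.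

Lemma Imod_add p n r lam s a b : Imod p n r lam s a -> Imod p n r lam s b -> Imod p n r lam s (a + b).
Proof.
move=> [c ->] [d ->]; exists (fun i => c i + d i); rewrite -big_split /=.
by apply: eq_bigr => i _; rewrite mulrzDr.
Qed.

Lemma Imod_mulz p n r lam s a (e : int) : Imod p n r lam s a -> Imod p n r lam s (a *~ e).
Proof.
move=> [c ->]; exists (fun i => c i * e); rewrite mulrz_suml.
by apply: eq_bigr => i _; rewrite mulrzA.
Qed.

Lemma Imod_opp p n r lam s a : Imod p n r lam s a -> Imod p n r lam s (- a).
Proof. by move=> h; rewrite -mulrN1z; apply: Imod_mulz. Qed.

Lemma Imod_0 p n r lam s : Imod p n r lam s 0.
Proof. by exists (fun _ => 0); rewrite big1 // => i _; rewrite mulr0z. Qed.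

Lemma Imod_sum p n r lam s (I : Type) (rr : seq I) (P : pred I) (F : I -> algC) :
  (forall i, P i -> Imod p n r lam s (F i)) -> Imod p n r lam s (\sum_(i <- rr | P i) F i).
Proof.
move=> h; elim/big_rec: _ => [|i x Pi hx]; first exact: Imod_0.
exact: Imod_add (h i Pi) hx.
Qed.

Lemma Imod_iter p n r lam s k : (0 < n)%N ->
  iter n s (xx p n r lam s) = xx p n r lam s ->
  Imod p n r lam s (iter k s (xx p n r lam s)).
Proof.
move=> n0 xf; pose i0 := Ordinal (ltn_pmod k n0).
exists (fun i => (i == i0)%:Z); rewrite (bigD1 i0) //= eqxx mulr1z big1 ?addr0.
  by rewrite [in LHS](divn_eq k n) addnC iterD iter_fix.
by move=> j /negbTE ->; rewrite mulr0z.
Qed.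

Lemma x_fix p n r lam (s : {rmorphism algC -> algC}) : prime p -> odd p ->
  (p.-1).-primitive_root (r%:R : 'F_p) ->
  (lam * (r%:Z - 1) = 1 %[mod p%:Z])%Z -> s (zeta p) = zeta p ^+ r ->
  (0 < n)%N -> (n %| p.-1)%N ->
  iter n s (xx p n r lam s) = xx p n r lam s.
Proof.
move=> pp op pr hl hs n0 np.
have mn : (p.-1 %/ n * n = p.-1)%N by rewrite divnK.
have m0 : (1 <= p.-1 %/ n)%N.
  move: mn (prime_gt1 pp); case: (p.-1 %/ n)%N => [|//]; rewrite mul0n; lia.
rewrite /xx iter_sum_r.
under eq_bigr do rewrite -iterD -mulSn.
rewrite big_nat_recr // big_nat_recl //=; rewrite addrC; congr (_ + _).
by rewrite mulSn iterD mn -[p.-1]add0n z_period // mul1n.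
Qed.

Lemma hard_dir p n r lam (s : {rmorphism algC -> algC}) y : prime p -> odd p ->
  (p.-1).-primitive_root (r%:R : 'F_p) ->
  (lam * (r%:Z - 1) = 1 %[mod p%:Z])%Z -> s (zeta p) = zeta p ^+ r ->
  (0 < n)%N -> (n %| p.-1)%N ->
  OK p n s y -> Imod p n r lam s (xx p n r lam s * y).
Proof.
move=> pp op pr hl hs n0 np [[Qy fy] Ay].
have xf := x_fix p n r lam s pp op pr hl hs n0 np.
have [q Dy] := QA_Z p y pp Qy Ay.
pose T w := \sum_(1 <= j < (p.-1 %/ n).+1) iter (j * n) s w.
pose D a := zeta p ^ lam * alpha p r * (1 - zeta p ^+ a).
have TD : forall a, Imod p n r lam s (T (D a)).
  move=> a; rewrite /D; case: (D_term p r lam s a pp op pr hl hs) => [->|[k ->]].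
    by rewrite /T big1 ?iter0_r //; [exact: Imod_0 | move=> j _; exact: iter0_r].
  have -> : T ((-1) ^+ k * iter k s (zz p r lam)) = iter k s (xx p n r lam s) *~ ((-1) ^+ k).
    rewrite /xx iter_sum_r mulrz_suml; apply: eq_bigr => j _.
    rewrite iterM_r iter_comm mulrC -mulrzr; congr (_ * _).
    by rewrite iterX_r iterN_r iter1_r rmorphXn rmorphN1.
  by apply: Imod_mulz; apply: Imod_iter.
have Tlin : forall (I : Type) (rr : seq I) (F : I -> algC),
    T (\sum_(i <- rr) F i) = \sum_(i <- rr) T (F i).
  move=> I rr F; rewrite /T; under eq_bigr do rewrite iter_sum_r.
  by rewrite exchange_big.
have xy : xx p n r lam s * y = T (zz p r lam * y).
  rewrite /T /xx mulr_suml; apply: eq_bigr => j _.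
  by rewrite [RHS]iterM_r (iter_fix _ _ _ j fy).
rewrite xy Dy horner_coef mulr_sumr Tlin.
apply: Imod_sum => i _.
have -> : zz p r lam * ((map_poly intr q)`_i * zeta p ^+ i) = (D i.+1 - D i) *~ q`_i.
  rewrite coef_map /= -mulrzr /D /zz exprSr; ring.
have -> : T ((D i.+1 - D i) *~ q`_i) = (T (D i.+1) - T (D i)) *~ q`_i.
  rewrite /T -sumrB mulrz_suml; apply: eq_bigr => j _.
  by rewrite iterMz_r iterD_r iterN_r.
apply: Imod_mulz; apply: Imod_add; [exact: TD | apply: Imod_opp; exact: TD].
Qed.

Lemma Zz_s p r (s : {rmorphism algC -> algC}) y :
  s (zeta p) = zeta p ^+ r -> Zzeta p y -> Zzeta p (s y).
Proof.
move=> hs [q ->]; rewrite horner_coef rmorph_sum; apply: Zz_sum => i _.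
rewrite rmorphM rmorphXn hs coef_map /= rmorph_int -exprM; exact: Zz_intpow.
Qed.

Lemma easy_dir p n r lam (s : {rmorphism algC -> algC}) w : prime p -> odd p ->
  (p.-1).-primitive_root (r%:R : 'F_p) ->
  (lam * (r%:Z - 1) = 1 %[mod p%:Z])%Z -> s (zeta p) = zeta p ^+ r ->
  (0 < n)%N -> (n %| p.-1)%N ->
  Zzeta p (s (xx p n r lam s) / xx p n r lam s) ->
  Imod p n r lam s w -> principal p n r lam s w.
Proof.
move=> pp op pr hl hs n0 np hZ [c ->].
have xf := x_fix p n r lam s pp op pr hl hs n0 np.
move: hZ xf; set x := xx p n r lam s => hZ xf.
have [x0|x0] := eqVneq x 0.
  exists 0; last by rewrite x0 mulr0 big1 // => i _; rewrite iter0_r mul0rz.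
  split; last exact: Aint0.
  split; last exact: iter0_r.
  by exists 0; rewrite rmorph0 horner0.
have Zi : forall i, Zzeta p (iter i s x / x).
  elim => [|i IH]; first by rewrite /= divff //; exact: (Zz_int p 1).
  have sx0 : s x != 0 by rewrite fmorph_eq0.
  have -> : iter i.+1 s x / x = s (iter i s x / x) * (s x / x).
    by rewrite iterS rmorphM fmorphV /= mulrA divfK.
  by apply: Zz_mul => //; apply: (Zz_s p r s _ hs).
pose y := \sum_(i < n) (iter i s x / x) *~ c i.
have Zy : Zzeta p y.
  by apply: Zz_sum => i _; rewrite -mulrzr; apply: Zz_mul => //; apply: Zz_int.
exists y; last first.
  by rewrite /y mulr_sumr; apply: eq_bigr => i _; rewrite mulrzAr mulrC divfK.
split; last exact: Zz_Aint pp Zy.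
split; first exact: Zz_Q.
rewrite /y iter_sum_r; apply: eq_bigr => i _.
by rewrite iterMz_r iterM_r iterV_r iter_comm xf.
Qed.


Theorem theorem4 (n p r : nat) (lam : int) (s : {rmorphism algC -> algC}) :
  (1 < n)%N -> odd n -> prime p -> p = 1 %[mod n] ->
  (p.-1).-primitive_root (r%:R : 'F_p) ->
  (lam * (r%:Z - 1) = 1 %[mod p%:Z])%Z ->
  s (zeta p) = zeta p ^+ r ->
  Zzeta p (s (xx p n r lam s) / xx p n r lam s) ->
  forall w : algC, Imod p n r lam s w <-> principal p n r lam s w.
Proof.
move=> hn on pp pm pr hl hs hZ w.
have n0 : (0 < n)%N by apply: ltnW.
have n3 : (2 < n)%N by move: hn on; case: n {pm hZ n0} => [|[|[|]]].
have op : odd p.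
  case: (even_prime pp) => // p2; move: pm; rewrite p2 !modn_small //.
have np : (n %| p.-1)%N.
  by rewrite -subn1 -eqn_mod_dvd ?prime_gt0 //; apply/eqP.
split.
  exact: easy_dir pp op pr hl hs n0 np hZ.
case=> y hy ->; exact: hard_dir pp op pr hl hs n0 np hy.
Qed.
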